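(* Let $v(0)\in\mathcal N^*$, $v(0)\ne0$, and let $E_0$ be its critical core. For all $w\ge1/m_1(0)$, $$\frac{m_1(0)}{m_2(0)}\frac1{w^2}\le E_0(w)\le\frac1{w^2}\qquad\text{and}\qquad\Big|\frac{dE_0}{dw}(w)\Big|\le4m_2(0)^2m_3(0)=:D.$$ Consequently $\sup_{w\ge1/m_1(0)}E_0(w)\le m_1(0)^2$, $\min_{1/m_1(0)\le y\le w}E_0(y)\ge\frac{m_1(0)}{m_2(0)}\frac1{w^2}$, and for $1/m_1(0)\le w_1\le w_2$, $\max_{[w_1,w_2]}E_0-\min_{[w_1,w_2]}E_0\le D(w_2-w_1)$.
   Context: $\mathcal N^*$: finitely supported sequences $v=(v_k)_{k\ge1}$ of nonnegative reals; $m_j(0)=\sum_kk^jv_k(0)$ for $j=1,2,3$. Critical core: with $U_0(x)=\sum_kv_k(0)(e^{-kx}-1)$, the function $E_0:(0,\infty)\to(0,\infty)$ is defined by $E_0\big(-1/U_0'(x)\big)=\frac{(-U_0'(x))^3}{U_0''(x)}$ for $x\in\mathbb R$ (the map $x\mapsto-1/U_0'(x)$ is a bijection $\mathbb R\to(0,\infty)$); equivalently $E_0=F_0'$ where $F_0(-1/U_0'(x))=-U_0(x)$. *)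

(* Defs.v *)
From mathcomp Require Import all_boot all_order all_algebra.
From mathcomp Require Import all_classical all_reals all_analysis.
Set Implicit Arguments. Unset Strict Implicit. Unset Printing Implicit Defensive.
Import Order.TTheory GRing.Theory Num.Theory.
Local Open Scope ring_scope.

(* A finitely supported sequence v = (v_k)_{k>=1} is given by v : nat -> R
   together with a bound N on its support: only v 1, ..., v N enter.  *)

Definition moment {R : realType} (N : nat) (v : nat -> R) (j : nat) : R :=
  \sum_(1 <= k < N.+1) (k%:R ^+ j) * v k.

Definition U0 {R : realType} (N : nat) (v : nat -> R) (x : R) : R :=
  \sum_(1 <= k < N.+1) v k * (expR (- (k%:R * x)) - 1).

(* E is the critical core of v: E(-1/U_0'(x)) = (-U_0'(x))^3 / U_0''(x) for all real x.
   Since x |-> -1/U_0'(x) is a bijection R -> (0,oo), this determines E on (0,oo). *)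
Definition is_critical_core {R : realType} (N : nat) (v : nat -> R) (E : R -> R) : Prop :=
  forall x : R,
    E (- (derive1 (U0 N v) x)^-1) =
      (- derive1 (U0 N v) x) ^+ 3 / derive1n 2 (U0 N v) x.

(* Main.v *)
Require Import Defs.
From mathcomp Require Import all_boot all_order all_algebra.
From mathcomp Require Import all_classical all_reals all_analysis.
From mathcomp Require Import ring lra.
Import Order.TTheory GRing.Theory Num.Theory.
Local Open Scope ring_scope.

Lemma is_derive_lin (R : realType) (k x : R) : is_derive x 1 (fun y : R => - (k * y)) (- k).
Proof.
have H1 : is_derive x 1 (fun y : R => k * y) k.
  have := @is_deriveZ R R^o R^o id k x 1 1 (is_derive_id x 1).
  by rewrite /GRing.scale /= mulr1.
exact: (@is_deriveN R R^o R^o _ x 1 k H1).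
Qed.
Lemma is_derive_term (R : realType) (c k x : R) :
  is_derive x 1 (fun y => c * expR (- (k * y))) (c * (expR (- (k * x)) * - k)).
Proof.
have H := @is_derive1_comp R expR (fun y : R => - (k * y)) x _ _ (is_derive_expR _) (is_derive_lin R k x).
exact: (@is_deriveZ R R^o R^o _ c x 1 _ H).
Qed.
Lemma is_derive_sumnat (R : realType) (n : nat) (f df : nat -> R -> R) (x : R) :
  (forall k, is_derive x 1 (f k) (df k x)) ->
  is_derive x 1 (fun y => \sum_(1 <= k < n.+1) f k y) (\sum_(1 <= k < n.+1) df k x).
Proof.
move=> H; elim: n => [|n IH].
  under eq_fun do rewrite big_geq //.
  rewrite big_geq //; exact: is_derive_cst.
under eq_fun do rewrite big_nat_recr //=.
rewrite big_nat_recr //=.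
exact: (@is_deriveD R R^o R^o _ _ x 1 _ _ IH (H n.+1)).
Qed.
Lemma sum_ge_term (R : realType) (n k0 : nat) (F : nat -> R) :
  (1 <= k0 <= n)%N -> (forall k, 0 <= F k) -> F k0 <= \sum_(1 <= k < n.+1) F k.
Proof.
move=> hk hF.
rewrite (bigD1_seq k0) //=; last exact: iota_uniq.
  by rewrite lerDl sumr_ge0.
by rewrite mem_index_iota ltnS.
Qed.
Lemma sum_pos_term (R : realType) (n k0 : nat) (F : nat -> R) :
  (1 <= k0 <= n)%N -> (forall k, 0 <= F k) -> 0 < F k0 -> 0 < \sum_(1 <= k < n.+1) F k.
Proof. by move=> hk hF hp; apply: (lt_le_trans hp); apply: sum_ge_term. Qed.

Section Main.
Variable R : realType.
Variable N : nat.
Variable v : nat -> R.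
Hypothesis v_ge0 : forall k, 0 <= v k.
Variable k0 : nat.
Hypothesis hk0 : (1 <= k0 <= N)%N.
Hypothesis vk0 : v k0 != 0.

Definition S (j : nat) (x : R) : R :=
  \sum_(1 <= k < N.+1) (k%:R ^+ j * v k) * expR (- (k%:R * x)).

Lemma S_derive (j : nat) (x : R) : is_derive x 1 (S j) (- S j.+1 x).
Proof.
apply: is_derive_eq.
  apply: (@is_derive_sumnat R N (fun k y => (k%:R ^+ j * v k) * expR (- (k%:R * y)))
     (fun k y => (k%:R ^+ j * v k) * (expR (- (k%:R * y)) * - k%:R))).
  move=> k; exact: is_derive_term.
rewrite /S -sumrN; apply: eq_bigr => k _.
rewrite exprS. ring.
Qed.
Lemma U0_eq : U0 N v = fun y => S 0 y - \sum_(1 <= k < N.+1) v k.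
Proof.
apply: funext => y; rewrite /U0 /S -sumrB; apply: eq_bigr => k _.
by rewrite expr0 mul1r mulrBr mulr1.
Qed.

Lemma U0_derive (x : R) : is_derive x 1 (U0 N v) (- S 1 x).
Proof.
rewrite U0_eq.
have := @is_deriveB R R^o R^o (S 0) (cst (\sum_(1 <= k < N.+1) v k)) x 1 _ _ (S_derive 0 x) (is_derive_cst _ _ _).
by rewrite subr0.
Qed.

Lemma dU0 : derive1 (U0 N v) = fun x => - S 1 x.
Proof. by apply: funext => x; rewrite derive1E; apply: derive_val; apply: U0_derive. Qed.

Lemma d2U0 (x : R) : derive1n 2 (U0 N v) x = S 2 x.
Proof.
rewrite /derive1n /= dU0 derive1E.
have := @is_deriveN R R^o R^o (S 1) x 1 _ (S_derive 1 x).
rewrite opprK => H; exact: derive_val.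
Qed.

Lemma S_gt0 j x : 0 < S j x.
Proof.
apply: (@sum_pos_term R N k0) => //.
  by move=> k; rewrite mulr_ge0 ?expR_ge0 // mulr_ge0 // exprn_ge0.
rewrite mulr_gt0 ?expR_gt0 // mulr_gt0 //.
  by rewrite exprn_gt0 // ltr0n; case/andP: hk0.
by rewrite lt_def vk0 v_ge0.
Qed.

Lemma S0 j : S j 0 = moment N v j.
Proof. by apply: eq_bigr => k _; rewrite mulr0 oppr0 expR0 mulr1. Qed.

Lemma mom_gt0 j : 0 < moment N v j.
Proof. by rewrite -S0 S_gt0. Qed.

Lemma S_le_next j x : S j x <= S j.+1 x.
Proof.
apply: ler_sum_nat => k /andP[k1 _].
rewrite ler_wpM2r ?expR_ge0 // ler_wpM2r // exprS ler_peMl ?exprn_ge0 //.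
by rewrite ler1n.
Qed.

Lemma mom_le_next j : moment N v j <= moment N v j.+1.
Proof. by rewrite -!S0 S_le_next. Qed.

Lemma S_le_mom j x : 0 <= x -> S j x <= moment N v j.
Proof.
move=> x0; rewrite -S0; apply: ler_sum_nat => k /andP[k1 _].
rewrite ler_wpM2l ?mulr_ge0 ?exprn_ge0 // mulr0 oppr0 expR0 expR_le1.
by rewrite oppr_le0 mulr_ge0.
Qed.
Lemma mom_S_ineq x : 0 <= x -> moment N v 1 * S 2 x <= moment N v 2 * S 1 x.
Proof.
move=> x0; rewrite -subr_ge0.
pose e := fun k : nat => expR (- (k%:R * x)).
pose A := fun j k : nat => (j%:R ^+ 2 * v j) * (k%:R ^+ 1 * v k * e k) - (j%:R ^+ 1 * v j) * (k%:R ^+ 2 * v k * e k).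
have H : moment N v 2 * S 1 x - moment N v 1 * S 2 x =
   \sum_(1 <= j < N.+1) \sum_(1 <= k < N.+1) A j k.
  rewrite /moment /S !mulr_suml -sumrB; apply: eq_bigr => j _.
  by rewrite !mulr_sumr -sumrB.
have H2 : \sum_(1 <= j < N.+1) \sum_(1 <= k < N.+1) A j k =
   \sum_(1 <= j < N.+1) \sum_(1 <= k < N.+1) A k j by rewrite exchange_big.
suff : 0 <= \sum_(1 <= j < N.+1) \sum_(1 <= k < N.+1) A j k +
            \sum_(1 <= j < N.+1) \sum_(1 <= k < N.+1) A j k by rewrite H; lra.
rewrite {2}H2 -big_split; apply: sumr_ge0 => j _; rewrite -big_split; apply: sumr_ge0 => k _.
change (0 <= A j k + A k j).
have -> : A j k + A k j = (j%:R * v j) * (k%:R * v k) * ((j%:R - k%:R) * (e k - e j)).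
  rewrite /A; ring.
apply: mulr_ge0; first by rewrite mulr_ge0 // mulr_ge0.
have [jk|kj] := leP j k.
  apply: mulr_le0; first by rewrite subr_le0 ler_nat.
  by rewrite subr_le0 /e ler_expR lerN2 ler_wpM2r // ler_nat.
apply: mulr_ge0; first by rewrite subr_ge0 ler_nat ltnW.
by rewrite subr_ge0 /e ler_expR lerN2 ler_wpM2r // ler_nat ltnW.
Qed.
Lemma S1_decr x y : x < y -> S 1 y < S 1 x.
Proof.
move=> xy; rewrite -subr_gt0 /S -sumrB.
apply: (@sum_pos_term R N k0) => //.
  move=> k; rewrite -mulrBr mulr_ge0 ?mulr_ge0 ?exprn_ge0 // subr_ge0.
  by rewrite ler_expR lerN2 ler_wpM2l // ltW.
rewrite -mulrBr mulr_gt0 ?mulr_gt0 ?exprn_gt0 //.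
- by rewrite ltr0n; case/andP: hk0.
- by rewrite lt_def vk0 v_ge0.
rewrite subr_gt0 ltr_expR ltrN2 ltr_pM2l //.
by rewrite ltr0n; case/andP: hk0.
Qed.

Lemma S1_upper b : 0 <= b -> S 1 b <= moment N v 1 * expR (- b).
Proof.
move=> b0; rewrite -S0 /S mulr_suml; apply: ler_sum_nat => k /andP[k1 _].
rewrite mulr0 oppr0 expR0 mulr1 ler_wpM2l ?mulr_ge0 ?exprn_ge0 //.
rewrite ler_expR lerN2 ler_peMl // ler1n //.
Qed.

Definition phi x := (S 1 x)^-1.

Lemma phi_incr x y : x < y -> phi x < phi y.
Proof. by move=> xy; rewrite /phi ltf_pV2 ?posrE ?S_gt0 // S1_decr. Qed.

Lemma phi_le x y : (phi x <= phi y) = (x <= y).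
Proof.
apply/idP/idP => h; last first.
  by move: h; rewrite le_eqVlt => /predU1P[->//|/phi_incr/ltW].
by rewrite leNgt; apply/negP => /phi_incr; rewrite ltNge h.
Qed.

Lemma phi_inj x y : phi x = phi y -> x = y.
Proof. by move=> h; apply/eqP; rewrite eq_le -[x <= y]phi_le -[y <= x]phi_le h lexx. Qed.
Lemma S1_lower (a : R) : a <= 0 -> k0%:R * v k0 * expR (- a) <= S 1 a.
Proof.
move=> a0.
have := @sum_ge_term R N k0 (fun k => (k%:R ^+ 1 * v k) * expR (- (k%:R * a))) hk0.
move=> /(_ _) H; apply: le_trans (H _); last first.
  by move=> k; rewrite mulr_ge0 ?expR_ge0 // mulr_ge0 // exprn_ge0.
rewrite /= expr1 ler_wpM2l ?mulr_ge0 // ler_expR lerN2.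
have : 1 <= k0%:R :> R by rewrite ler1n; case/andP: hk0.
nra.
Qed.

Lemma phi_derive (x : R) : is_derive x 1 phi (S 2 x / S 1 x ^+ 2).
Proof.
apply: is_derive_eq.
  apply: (@is_deriveV R (S 1) x _ 1); last exact: S_derive.
  by rewrite gt_eqF // S_gt0.
by rewrite /GRing.scale /= mulrNN mulrC.
Qed.
Lemma S1_upper2 (b : R) : 0 <= b -> S 1 b <= moment N v 1 * expR (- b).
Proof. exact: S1_upper. Qed.
Lemma phi_cont : continuous (phi : R^o -> R^o).
Proof.
move=> x; apply: differentiable_continuous; apply/derivable1_diffP.
by have [] := phi_derive x.
Qed.

Lemma phi_surj (y : R) : 0 < y -> exists x : R, phi x = y.
Proof.
move=> y0.
set m := moment N v 1; set c := k0%:R * v k0.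
have m0 : 0 < m by apply: mom_gt0.
have c0 : 0 < c.
  rewrite mulr_gt0 //; first by rewrite ltr0n; case/andP: hk0.
  by rewrite lt_def vk0 v_ge0.
have Em : expR (- ln (m * y)) = (m * y)^-1 by rewrite expRN lnK // posrE mulr_gt0.
have Ec : expR (- ln (c * y)) = (c * y)^-1 by rewrite expRN lnK // posrE mulr_gt0.
pose b : R := Num.max 0 (ln (m * y)); pose a : R := Num.min 0 (ln (c * y)).
have b0 : 0 <= b by rewrite le_max lexx.
have a0 : a <= 0 by rewrite ge_min lexx.
have hb : y <= phi b.
  have h1 : S 1 b <= y^-1.
    apply: (le_trans (S1_upper2 b b0)).
    have h : expR (- b) <= (m * y)^-1.
      by rewrite -Em ler_expR lerN2 le_max lexx orbT.
    apply: le_trans (ler_wpM2l (ltW m0) h) _.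
    by rewrite invfM mulrA mulfV ?gt_eqF // mul1r.
  by rewrite /phi -[y]invrK lef_pV2 ?posrE ?invr_gt0 ?S_gt0.
have ha : phi a <= y.
  have h1 : y^-1 <= S 1 a.
    apply: le_trans (S1_lower a a0).
    have h : (c * y)^-1 <= expR (- a).
      by rewrite -Ec ler_expR lerN2 ge_min lexx orbT.
    apply: le_trans (ler_wpM2l (ltW c0) h).
    by rewrite invfM mulrA mulfV ?gt_eqF // mul1r.
  by rewrite /phi -[y]invrK lef_pV2 ?posrE ?invr_gt0 ?S_gt0.
have ab : a <= b := le_trans a0 b0.
have hmm : Num.min (phi a) (phi b) <= y <= Num.max (phi a) (phi b).
  by rewrite ge_min ha /= le_max hb orbT.
have [x _ hx] := @IVT R (phi : R^o -> R^o) a b y ab (continuous_subspaceT phi_cont) hmm.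
by exists x.
Qed.
Variable E : R -> R.
Hypothesis hE : is_critical_core N v E.

Definition psi (y : R) : R := xget 0 [set x | phi x = y].

Lemma psiK x : psi (phi x) = x.
Proof. apply: phi_inj; exact: (@xgetI _ 0 [set z | phi z = phi x] x). Qed.

Lemma phiK (y : R) : 0 < y -> phi (psi y) = y.
Proof. by move=> /phi_surj ex; apply: (@xgetPex _ 0 [set z | phi z = y]). Qed.

Definition G (x : R) : R := S 1 x ^+ 3 / S 2 x.

Lemma E_phi x : E (phi x) = G x.
Proof.
have := hE x; rewrite dU0 d2U0 /= invrN !opprK => ->.
by [].
Qed.

Lemma E_G (y : R) : 0 < y -> E y = G (psi y).
Proof. by move=> y0; rewrite -E_phi phiK. Qed.

Lemma phi0 : phi 0 = (moment N v 1)^-1.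
Proof. by rewrite /phi S0. Qed.

Lemma psi_ge0 (w : R) : (moment N v 1)^-1 <= w -> 0 <= psi w.
Proof.
move=> hw; have w0 : 0 < w by apply: lt_le_trans hw; rewrite invr_gt0 mom_gt0.
by rewrite -phi_le phiK // phi0.
Qed.

Definition Gd (x : R) : R :=
  S 1 x ^+ 3 *: (- S 2 x ^- 2 *: - S 3 x) + (S 2 x)^-1 *: ((3%:R * S 1 x ^+ 2) *: - S 2 x).

Lemma G_derive (x : R) : is_derive x 1 G (Gd x).
Proof.
have H1 := @is_deriveX R R^o (S 1) 3 x 1 _ (S_derive 1 x).
have H2 := @is_deriveV R (S 2) x _ 1 (lt0r_neq0 (S_gt0 2 x)) (S_derive 2 x).
have H3 := @is_deriveM R R^o _ _ x 1 _ _ H1 H2.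
exact: H3.
Qed.
Lemma E_derive (w : R) : 0 < w ->
  is_derive w 1 E (Gd (psi w) * (S 2 (psi w) / S 1 (psi w) ^+ 2)^-1).
Proof.
move=> w0; set x := psi w.
have l0 : S 2 x / S 1 x ^+ 2 != 0.
  by rewrite lt0r_neq0 // divr_gt0 ?exprn_gt0 ?S_gt0.
have Hi := @is_derive_inverse R phi psi _ x _ _ (phi_derive x) l0.
have Hi' : is_derive w 1 psi (S 2 x / S 1 x ^+ 2)^-1.
  rewrite -{1}(phiK w w0); apply: Hi.
  near=> z.
  exact: psiK.
  near=> z.
  exact: phi_cont.
have Hc := @is_derive1_comp R G psi w _ _ (G_derive x) Hi'.
apply: near_eq_is_derive Hc.
near=> y.
have y0 : 0 < y by near: y; exact: lt_nbhsr w0.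
by rewrite /= E_G.
Unshelve. all: by end_near.
Qed.
Lemma bound_aux (s1 s2 s3 m1 m2 m3 : R) : 0 < s1 -> s1 <= s2 -> 0 < s3 ->
  s1 <= m1 -> s3 <= m3 -> m1 <= m2 -> m2 <= m3 ->
  `| s1 ^+ 2 * s3 * (s1 / s2) ^+ 3 - 3 * s1 ^+ 3 * (s1 / s2) | <= 4 * m2 ^+ 2 * m3.
Proof.
move=> s10 s12 s30 sm1 sm3 m12 m23.
have s20 : 0 < s2 := lt_le_trans s10 s12.
have r0 : 0 <= s1 / s2 by rewrite divr_ge0 // ltW.
have r1 : s1 / s2 <= 1 by rewrite ler_pdivrMr // mul1r.
have r31 : (s1 / s2) ^+ 3 <= 1 by rewrite exprn_ile1.
have r30 : 0 <= (s1 / s2) ^+ 3 by rewrite exprn_ge0.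
have sm2 : s1 <= m2 := le_trans sm1 m12.
have sm3' : s1 <= m3 := le_trans sm2 m23.
have q1 : s1 ^+ 2 <= m2 ^+ 2 by rewrite !expr2; apply: ler_pM => //; apply: ltW.
have q2 : s1 ^+ 2 * s3 <= m2 ^+ 2 * m3 by apply: ler_pM => //; rewrite ?exprn_ge0 ?ltW.
have q3 : s1 ^+ 3 <= m2 ^+ 2 * m3.
  by rewrite exprSr; apply: ler_pM => //; rewrite ?exprn_ge0 ?ltW.
set P := s1 ^+ 2 * s3 * (s1 / s2) ^+ 3.
set Q := 3 * s1 ^+ 3 * (s1 / s2).
have P0 : 0 <= P.
  rewrite /P; apply: mulr_ge0 => //; apply: mulr_ge0; [apply: exprn_ge0; exact: ltW | exact: ltW].
have Q0 : 0 <= Q.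
  rewrite /Q; apply: mulr_ge0 => //; apply: mulr_ge0 => //; apply: exprn_ge0; exact: ltW.
have PM : P <= m2 ^+ 2 * m3.
  apply: le_trans q2; rewrite /P -[X in _ <= X]mulr1 ler_wpM2l //.
  by rewrite mulr_ge0 ?exprn_ge0 // ltW.
have QM : Q <= 3 * (m2 ^+ 2 * m3).
  rewrite /Q -mulrA ler_wpM2l // ; apply: le_trans q3.
  rewrite -[X in _ <= X]mulr1 ler_wpM2l // exprn_ge0 // ltW //.
rewrite ler_norml; apply/andP; split; lra.
Qed.
Lemma deriv_bound (w : R) : (moment N v 1)^-1 <= w ->
  derivable E w 1 /\ `|derive1 E w| <= 4 * moment N v 2 ^+ 2 * moment N v 3.
Proof.
move=> hw.
have w0 : 0 < w by apply: lt_le_trans hw; rewrite invr_gt0 mom_gt0.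
have H := E_derive w w0.
split; first by case: H.
have -> : derive1 E w = Gd (psi w) * (S 2 (psi w) / S 1 (psi w) ^+ 2)^-1.
  by rewrite derive1E; apply: derive_val.
have x0 := psi_ge0 w hw.
set x := psi w.
have s10 := S_gt0 1 x; have s20 := S_gt0 2 x.
have -> : Gd x * (S 2 x / S 1 x ^+ 2)^-1 =
   S 1 x ^+ 2 * S 3 x * (S 1 x / S 2 x) ^+ 3 - 3 * S 1 x ^+ 3 * (S 1 x / S 2 x).
  rewrite /Gd /GRing.scale /=.
  field; rewrite ?lt0r_neq0 //.
apply: (@bound_aux _ _ _ (moment N v 1)) => //.
- exact: S_le_next.
- exact: S_gt0.
- exact: S_le_mom.
- exact: S_le_mom.
- exact: mom_le_next.
- exact: mom_le_next.
Qed.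
Lemma E_bounds (w : R) : (moment N v 1)^-1 <= w ->
  moment N v 1 / moment N v 2 / w ^+ 2 <= E w /\ E w <= (w ^+ 2)^-1 /\
  (w ^+ 2)^-1 <= moment N v 1 ^+ 2.
Proof.
move=> hw.
have w0 : 0 < w by apply: lt_le_trans hw; rewrite invr_gt0 mom_gt0.
have x0 := psi_ge0 w hw.
have wE : w = phi (psi w) by rewrite phiK.
rewrite wE E_phi /G /phi.
set x := psi w.
have s10 := S_gt0 1 x; have s20 := S_gt0 2 x.
have m10 := mom_gt0 1; have m20 := mom_gt0 2.
have Hi := mom_S_ineq x x0.
have H12 := S_le_next 1 x.
have Hm := S_le_mom 1 x x0.
split; [|split].
- rewrite -subr_ge0.
  have -> : S 1 x ^+ 3 / S 2 x - moment N v 1 / moment N v 2 / (S 1 x)^-1 ^+ 2 =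
     S 1 x ^+ 2 * (moment N v 2 * S 1 x - moment N v 1 * S 2 x) / (moment N v 2 * S 2 x).
    by field; rewrite ?lt0r_neq0.
  apply: divr_ge0; last by rewrite mulr_ge0 // ltW.
  by apply: mulr_ge0; [rewrite exprn_ge0 // ltW | rewrite subr_ge0].
- rewrite -subr_ge0.
  have -> : ((S 1 x)^-1 ^+ 2)^-1 - S 1 x ^+ 3 / S 2 x =
     S 1 x ^+ 2 * (S 2 x - S 1 x) / S 2 x.
    by field; rewrite ?lt0r_neq0.
  apply: divr_ge0; last by rewrite ltW.
  by apply: mulr_ge0; [rewrite exprn_ge0 // ltW | rewrite subr_ge0].
- rewrite exprVn invrK !expr2; apply: ler_pM => //; exact: ltW.
Qed.

Lemma E_lip (a b : R) : (moment N v 1)^-1 <= a -> a <= b ->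
  `|E b - E a| <= 4 * moment N v 2 ^+ 2 * moment N v 3 * (b - a).
Proof.
move=> ha ab.
have hz z : a <= z -> (moment N v 1)^-1 <= z by move=> az; exact: le_trans ha az.
have D1 : forall z, z \in `]a, b[ -> is_derive z 1 E (derive1 E z).
  move=> z hzz; rewrite derive1E; apply: derivableP.
  have [] := deriv_bound z (hz z _) => //.
  by move: hzz; rewrite in_itv /= => /andP[/ltW].
have [c hc ->] : exists2 c, c \in `[a, b] & E b - E a = derive1 E c * (b - a).
  apply: (@MVT_segment R E (derive1 E) a b ab D1).
  apply: continuous_subspace_itv => z hzz.
  have hzb : (moment N v 1)^-1 <= z.
    by apply: hz; move: hzz; rewrite in_itv /= => /andP[].
  have [dz _] := deriv_bound z hzb.
  by apply: differentiable_continuous; exact/derivable1_diffP.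
rewrite normrM (@ger0_norm _ (b - a)) ?subr_ge0 // ler_wpM2r ?subr_ge0 //.
have hcb : (moment N v 1)^-1 <= c.
  by apply: hz; move: hc; rewrite in_itv /= => /andP[].
by have [_ ->] := deriv_bound c hcb.
Qed.
Lemma main_sec :
  let m1 := moment N v 1 in
  let m2 := moment N v 2 in
  let m3 := moment N v 3 in
  let D := 4 * m2 ^+ 2 * m3 in
  (forall w, m1^-1 <= w ->
     m1 / m2 / w ^+ 2 <= E w /\ E w <= (w ^+ 2)^-1) /\
  (forall w, m1^-1 <= w ->
     derivable E w 1 /\ `|derive1 E w| <= D) /\
  (forall w, m1^-1 <= w -> E w <= m1 ^+ 2) /\
  (forall w y, m1^-1 <= y -> y <= w -> m1 / m2 / w ^+ 2 <= E y) /\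
  (forall w1 w2, m1^-1 <= w1 -> w1 <= w2 ->
     forall y1 y2, w1 <= y1 <= w2 -> w1 <= y2 <= w2 ->
       E y1 - E y2 <= D * (w2 - w1)).
Proof.
move=> m1 m2 m3 D.
have m10 : 0 < m1 := mom_gt0 1.
have m20 : 0 < m2 := mom_gt0 2.
have m30 : 0 < m3 := mom_gt0 3.
have D0 : 0 <= D by rewrite /D !mulr_ge0 // ?exprn_ge0 // ltW.
split; [|split; [|split; [|split]]].
- by move=> w hw; have [? [? _]] := E_bounds w hw.
- exact: deriv_bound.
- by move=> w hw; have [_ [h1 h2]] := E_bounds w hw; apply: le_trans h2.
- move=> w y hy yw.
  have [h1 _] := E_bounds y hy; apply: le_trans h1.
  have y0 : 0 < y by apply: lt_le_trans hy; rewrite invr_gt0.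
  have w0 : 0 < w := lt_le_trans y0 yw.
  have hinv : (w ^+ 2)^-1 <= (y ^+ 2)^-1.
    rewrite lef_pV2 ?posrE ?exprn_gt0 //.
    by rewrite !expr2; apply: ler_pM => //; apply: ltW.
  apply: ler_pM => //.
  - by rewrite divr_ge0 // ltW.
  - by rewrite invr_ge0 exprn_ge0 // ltW.
- move=> w1 w2 hw1 w12 y1 y2 /andP[a1 b1] /andP[a2 b2].
  have [y12|y21] := leP y1 y2.
  + have h := E_lip y1 y2 (le_trans hw1 a1) y12.
    move: h; rewrite ler_norml => /andP[h1 h2].
    have hD : D * (y2 - y1) <= D * (w2 - w1) by rewrite ler_wpM2l //; lra.
    rewrite -/m2 -/m3 -/D in h1 h2; lra.
  + have h := E_lip y2 y1 (le_trans hw1 a2) (ltW y21).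
    move: h; rewrite ler_norml => /andP[h1 h2].
    have hD : D * (y1 - y2) <= D * (w2 - w1) by rewrite ler_wpM2l //; lra.
    rewrite -/m2 -/m3 -/D in h1 h2; lra.
Qed.
End Main.

Theorem lemma6 (R : realType) (N : nat) (v : nat -> R) (E : R -> R) :
  (forall k, 0 <= v k) ->
  (exists2 k, (1 <= k <= N)%N & v k != 0) ->
  is_critical_core N v E ->
  let m1 := moment N v 1 in
  let m2 := moment N v 2 in
  let m3 := moment N v 3 in
  let D := 4 * m2 ^+ 2 * m3 in
  (forall w, m1^-1 <= w ->
     m1 / m2 / w ^+ 2 <= E w /\ E w <= (w ^+ 2)^-1) /\
  (forall w, m1^-1 <= w ->
     derivable E w 1 /\ `|derive1 E w| <= D) /\
  (forall w, m1^-1 <= w -> E w <= m1 ^+ 2) /\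
  (forall w y, m1^-1 <= y -> y <= w -> m1 / m2 / w ^+ 2 <= E y) /\
  (forall w1 w2, m1^-1 <= w1 -> w1 <= w2 ->
     forall y1 y2, w1 <= y1 <= w2 -> w1 <= y2 <= w2 ->
       E y1 - E y2 <= D * (w2 - w1)).
Proof.
move=> hv [k0 hk0 vk0] hE.
exact: (@main_sec R N v hv k0 hk0 vk0 E hE).
Qed.
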